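(* Let $(K,\mathrm{val})$ be a $2$-henselian valued field whose residue class field $F$ has characteristic $\neq2$, let $A$ be a subring with $B\subseteq A\subseteq K$ and $H=\mathrm{val}(A^\times)$. Let $(M_g)_{g\in H\cup G_{\ge e}}$ be a family of quasi-quadratic modules in $F$ such that $M_g\subseteq M_h$ whenever either (i) $g\le h$ and $\overline g=\overline h$, or (ii) $M_g=F$ and ($[g]=[h]$ or $g\le h$). Then $\bigcup_{g\in H\cup G_{\ge e}}\Phi^A(M_g,[\![g]\!])$ is a quasi-quadratic module in $A$.
   Context: Let $(G,\le)$ be a totally ordered abelian group written multiplicatively with identity $e$; $G_{\ge e}=\{g\in G:g\ge e\}$, $G^2=\{g^2:g\in G\}$. Let $(K,\mathrm{val})$ be a valued field with surjective valuation $\mathrm{val}:K\to G\cup\{\infty\}$, valuation ring $B=\{x:\mathrm{val}(x)\ge e\}$, residue map $\pi:B\to F$, residue field $F$. A strict unit is $x\in B^\times$ with $\pi(x)=1$; when $\mathrm{char}F\ne2$, $2$-henselian is equivalent to every strict unit being a square in $K$. For a subring $A$ with $B\subseteq A\subseteq K$ put $H=\mathrm{val}(A^\times)$; $H$ is a convex subgroup of $G$ and $\mathrm{val}(A\setminus\{0\})=H\cup G_{\ge e}$. For $g\in G$: $\overline g$ is its class in $G/G^2$, $[\![g]\!]$ its class in $G/H^2$, $[g]$ its class in $G/H$; ''$\mathrm{val}(x)=\overline g$'' means $\overline{\mathrm{val}(x)}=\overline g$, similarly for $[\![\cdot]\!]$. A quasi-quadratic module in a commutative ring $R$ is a subset $M\subseteq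 R$ with $M+M\subseteq M$ and $a^2M\subseteq M$ for all $a\in R$. A pseudo-angular component map is a map $\mathrm{p.an}:K^\times\to F^\times$ such that: (1) $\mathrm{p.an}(u)=\pi(u)$ for $u\in B^\times$; (2) $\mathrm{p.an}(ux)=\pi(u)\mathrm{p.an}(x)$ for $u\in B^\times,x\in K^\times$; (3) for all $g\in G$, $c\in F^\times$ there is $w\in K$ with $\mathrm{val}(w)=g$, $\mathrm{p.an}(w)=c$; (4) for nonzero $x_1,x_2$ with $x_1+x_2\ne0$: if $\mathrm{val}(x_1)<\mathrm{val}(x_2)$ then $\mathrm{p.an}(x_1+x_2)=\mathrm{p.an}(x_1)$; if $\mathrm{val}(x_1)=\mathrm{val}(x_2)$ and $\mathrm{p.an}(x_1)+\mathrm{p.an}(x_2)\ne0$ then $\mathrm{val}(x_1+x_2)=\mathrm{val}(x_1)$ and $\mathrm{p.an}(x_1+x_2)=\mathrm{p.an}(x_1)+\mathrm{p.an}(x_2)$; (5) if $x,y\in K^\times$, $\overline{\mathrm{val}(x)}=\overline{\mathrm{val}(y)}$ and $\mathrm{p.an}(x)=\mathrm{p.an}(y)$ then $y=u^2x$ for some $u\in K^\times$; (6) for $a,u\in K^\times$ there is $k\in F^\times$ with $\mathrm{p.an}(au^2)=\mathrm{p.an}(a)k^2$. Such a map exists under the hypotheses; fix one. For $g\in G$ and a quasi-quadratic module $M$ in $F$: $$\Phi^A(M,[\![g]\!])=\{x\in A\setminus\{0\}:\ \mathrm{val}(x)=\overline g,\ (\mathrm{val}(x)=[\![g]\!]\ \text{or}\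 \mathrm{val}(x)>g),\ \mathrm{p.an}(x)\in M\}\cup\{0\}.$$ *)

(* Defs.v *)
From mathcomp Require Import all_boot all_order all_algebra.
Set Implicit Arguments. Unset Strict Implicit. Unset Printing Implicit Defensive.
Import GRing.Theory.
Local Open Scope ring_scope.

(* Totally ordered abelian group.  The paper writes G multiplicatively     *)
(* with identity e; we write it ADDITIVELY (G : zmodType): e = 0, g h = g+h,*)
(* g^2 = g + g, G^2 = {g + g}.  The order is a Prop relation [le].          *)
Definition is_toag (G : zmodType) (le : G -> G -> Prop) : Prop :=
  [/\ (forall g, le g g),
      (forall g h, le g h -> le h g -> g = h),
      (forall g h k, le g h -> le h k -> le g k),
      (forall g h, le g h \/ le h g)
    & (forall g h k, le g h -> le (g + k) (h + k))].

Definition glt (G : zmodType) (le : G -> G -> Prop) (g h : G) : Prop :=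
  le g h /\ g <> h.

(* order on G ∪ {∞}, with None = ∞ *)
Definition ole (G : zmodType) (le : G -> G -> Prop) (a b : option G) : Prop :=
  match a, b with
  | _, None => True
  | None, Some _ => False
  | Some x, Some y => le x y
  end.

Definition olt (G : zmodType) (le : G -> G -> Prop) (a b : option G) : Prop :=
  ole le a b /\ a <> b.

Definition oadd (G : zmodType) (a b : option G) : option G :=
  match a, b with
  | Some x, Some y => Some (x + y)
  | _, _ => None
  end.

Definition is_valuation (G : zmodType) (le : G -> G -> Prop) (K : fieldType)
    (val : K -> option G) : Prop :=
  [/\ (forall x, val x = None <-> x = 0),
      (forall x y, val (x * y) = oadd (val x) (val y)),
      (forall x y, ole le (val x) (val (x + y)) \/ ole le (val y) (val (x + y)))
    & (forall g, exists x, val x = Some g)].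

Definition valB (G : zmodType) (le : G -> G -> Prop) (K : fieldType)
    (val : K -> option G) (x : K) : Prop := ole le (Some 0) (val x).

Definition unitB (G : zmodType) (K : fieldType) (val : K -> option G) (x : K) : Prop :=
  val x = Some 0.

Definition is_residue_map (G : zmodType) (le : G -> G -> Prop) (K F : fieldType)
    (val : K -> option G) (pi : K -> F) : Prop :=
  [/\ (forall x y, valB le val x -> valB le val y -> pi (x + y) = pi x + pi y),
      (forall x y, valB le val x -> valB le val y -> pi (x * y) = pi x * pi y),
      pi 1 = 1,
      (forall x, valB le val x -> (pi x = 0 <-> olt le (Some 0) (val x)))
    & (forall c, exists x, valB le val x /\ pi x = c)].

Definition strict_unit (G : zmodType) (K F : fieldType) (val : K -> option G)
    (pi : K -> F) (x : K) : Prop := unitB val x /\ pi x = 1.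

(* 2-henselian, in the form given in the paper for char F <> 2:
   every strict unit is a square in K. *)
Definition two_henselian (G : zmodType) (K F : fieldType) (val : K -> option G)
    (pi : K -> F) : Prop :=
  forall x, strict_unit val pi x -> exists y : K, x = y * y.

Definition is_subring_overB (G : zmodType) (le : G -> G -> Prop) (K : fieldType)
    (val : K -> option G) (A : K -> Prop) : Prop :=
  A 0 /\ A 1 /\
  (forall x y, A x -> A y -> A (x + y)) /\
  (forall x, A x -> A (- x)) /\
  (forall x y, A x -> A y -> A (x * y)) /\
  (forall x, valB le val x -> A x).

Definition Hgrp (G : zmodType) (K : fieldType) (val : K -> option G)
    (A : K -> Prop) (g : G) : Prop :=
  exists x, [/\ A x, x <> 0, A x^-1 & val x = Some g].

Definition eq_modG2 (G : zmodType) (g h : G) : Prop := exists k, g - h = k + k.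
Definition eq_modH2 (G : zmodType) (H : G -> Prop) (g h : G) : Prop :=
  exists k, H k /\ g - h = k + k.
Definition eq_modH (G : zmodType) (H : G -> Prop) (g h : G) : Prop := H (g - h).

Definition is_pan (G : zmodType) (le : G -> G -> Prop) (K F : fieldType)
    (val : K -> option G) (pi : K -> F) (pan : K -> F) : Prop :=
  (forall x, x <> 0 -> pan x <> 0) /\
      (forall u, unitB val u -> pan u = pi u) /\
      (forall u x, unitB val u -> x <> 0 -> pan (u * x) = pi u * pan x) /\
      (forall g c, c <> 0 -> exists w, val w = Some g /\ pan w = c) /\
      (forall x1 x2, x1 <> 0 -> x2 <> 0 -> x1 + x2 <> 0 ->
         (olt le (val x1) (val x2) -> pan (x1 + x2) = pan x1) /\
         (val x1 = val x2 -> pan x1 + pan x2 <> 0 ->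
            val (x1 + x2) = val x1 /\ pan (x1 + x2) = pan x1 + pan x2)) /\
      (forall x y gx gy, x <> 0 -> y <> 0 -> val x = Some gx -> val y = Some gy ->
         eq_modG2 gx gy -> pan x = pan y -> exists u, u <> 0 /\ y = u * u * x) /\
    (forall a u, a <> 0 -> u <> 0 ->
         exists k, k <> 0 /\ pan (a * (u * u)) = pan a * (k * k)).

(* quasi-quadratic module M in the ring R (R given as subset S of an
   ambient ring, S = predT for the whole ring) *)
Definition qq_module (R : nzRingType) (S : R -> Prop) (M : R -> Prop) : Prop :=
  [/\ (forall x, M x -> S x),
      (forall x y, M x -> M y -> M (x + y))
    & (forall a x, S a -> M x -> M (a * a * x))].

Definition PhiA (G : zmodType) (le : G -> G -> Prop) (K F : fieldType)
    (val : K -> option G) (pan : K -> F) (A : K -> Prop)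
    (M : F -> Prop) (g : G) (x : K) : Prop :=
  x = 0 \/
  (A x /\ x <> 0 /\ exists gx, [/\ val x = Some gx, eq_modG2 gx g,
      (eq_modH2 (Hgrp val A) gx g \/ glt le g gx) & M (pan x)]).

(* Main.v *)
Require Import Defs.
From mathcomp Require Import all_boot all_order all_algebra.
From Stdlib Require Import Classical.
From mathcomp Require Import ring.
Import GRing.Theory.
Local Open Scope ring_scope.
Set Implicit Arguments. Unset Strict Implicit.

Section S.
Variables (G : zmodType) (le : G -> G -> Prop).
Hypothesis T : is_toag le.

Lemma lerefl a : le a a. Proof. by case: T. Qed.
Lemma leanti a b : le a b -> le b a -> a = b. Proof. by case: T => _ H _ _ _; apply: H. Qed.
Lemma letr a b c : le a b -> le b c -> le a c. Proof. by case: T => _ _ H _ _; apply: H. Qed.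
Lemma letot a b : le a b \/ le b a. Proof. by case: T. Qed.
Lemma leaddr a b c : le a b -> le (a + c) (b + c). Proof. by case: T => _ _ _ _ H; apply: H. Qed.
Lemma leaddl a b c : le a b -> le (c + a) (c + b).
Proof. by move=> h; rewrite ![c + _]addrC; apply: leaddr. Qed.
Lemma leD a b c d : le a b -> le c d -> le (a + c) (b + d).
Proof. move=> h1 h2; apply: (letr (leaddr c h1)); exact: leaddl. Qed.
Lemma lesub a b : le a b -> le 0 (b - a).
Proof. move=> h; have := leaddr (- a) h; by rewrite subrr. Qed.
Lemma lesub' a b : le 0 (b - a) -> le a b.
Proof. move=> h; have := leaddr a h; by rewrite add0r subrK. Qed.
Lemma leopp a b : le a b -> le (- b) (- a).
Proof. move=> h; have := leaddr (- a - b) h.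
by rewrite addrA subrr add0r addrCA subrr addr0. Qed.
Lemma glt_not_le a b : ~ le b a -> glt le a b.
Proof. move=> h; split; first by case: (letot a b) => // /h.
by move=> e; apply: h; rewrite e; apply: lerefl. Qed.
Lemma double0 a : le 0 a -> le (a + a) 0 -> a = 0.
Proof. move=> h1 h2; apply: leanti => //; apply: letr h2.
by have := leaddl a h1; rewrite addr0. Qed.
Lemma double0' (a : G) : a + a = 0 -> a = 0.
Proof. move=> e; case: (letot 0 a) => h.
  by apply: double0 => //; rewrite e; apply: lerefl.
apply/eqP; rewrite -oppr_eq0; apply/eqP; apply: double0; first by have := leopp h; rewrite oppr0.
by rewrite -opprD e oppr0; apply: lerefl.
Qed.

Lemma le_shift (s d : G) : le (s + d) 0 -> le d (- s).
Proof. move=> h; have := leaddl (- s) h; by rewrite addKr addr0. Qed.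

Variables (K : fieldType) (val : K -> option G) (A : K -> Prop).
Hypothesis V : is_valuation le val.
Hypothesis SA : is_subring_overB le val A.

Lemma val0x x : val x = None <-> x = 0. Proof. by case: V. Qed.
Lemma valM x y : val (x * y) = oadd (val x) (val y). Proof. by case: V. Qed.
Lemma valsurj g : exists x, val x = Some g. Proof. by case: V. Qed.
Lemma valult x y : ole le (val x) (val (x + y)) \/ ole le (val y) (val (x + y)).
Proof. by case: V. Qed.
Lemma valS x : x <> 0 -> exists g, val x = Some g.
Proof. case e: (val x) => [g|]; first by exists g. by move/val0x: e. Qed.
Lemma neq1 : (1 : K) <> 0. Proof. by apply/eqP; exact: oner_neq0. Qed.
Lemma val1 : val 1 = Some 0.
Proof.
have := valM 1 1; rewrite mulr1.
have [g eg] := valS neq1.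
rewrite eg /= => -[e]; congr Some; apply: (@addrI _ g); by rewrite addr0 -e.
Qed.
Lemma valV x g : x <> 0 -> val x = Some g -> val x^-1 = Some (- g).
Proof.
move=> nx eg; have := valM x x^-1; rewrite mulfV; last by apply/eqP.
have [m em] : exists m, val x^-1 = Some m.
  by apply: valS; rewrite -/(_ <> _); apply/eqP; rewrite invr_eq0; apply/eqP.
rewrite val1 eg em /= => -[e]; congr Some.
have /eqP := esym e; rewrite addr_eq0 => /eqP ->; by rewrite opprK.
Qed.
Lemma valN1 : val (-1) = Some 0.
Proof.
have := valM (-1) (-1); rewrite mulrNN mulr1 val1.
have [m em] : exists m, val (-1) = Some m.
  by apply: valS; apply/eqP; rewrite oppr_eq0; apply/eqP; exact: neq1.
rewrite em /= => -[e]; congr Some; by apply: double0'.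
Qed.
Lemma valN x : val (- x) = val x.
Proof. by rewrite -mulN1r valM valN1; case: (val x) => //= g; rewrite add0r. Qed.

Lemma A0 : A 0. Proof. by case: SA. Qed.
Lemma A1 : A 1. Proof. by case: SA => _ []. Qed.
Lemma AD x y : A x -> A y -> A (x + y). Proof. by case: SA => _ [_ [h _]]; apply: h. Qed.
Lemma AM x y : A x -> A y -> A (x * y). Proof. by case: SA => _ [_ [_ [_ [h _]]]]; apply: h. Qed.
Lemma AB x : valB le val x -> A x. Proof. by case: SA => _ [_ [_ [_ [_ h]]]]; apply: h. Qed.

Notation H := (Hgrp val A).

Lemma A_idx x g : A x -> x <> 0 -> val x = Some g -> H g \/ le 0 g.
Proof.
move=> Ax nx eg; case: (letot 0 g) => h; [by right | left].
exists x; split => //; apply: AB; rewrite /valB (valV nx eg) /=.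
by have := leopp h; rewrite oppr0.
Qed.

Lemma H0 : H 0. Proof. exists 1; split; [exact: A1|exact: neq1| by rewrite invr1; exact: A1 | exact: val1]. Qed.
Lemma HN g : H g -> H (- g).
Proof.
move=> [x [Ax nx Axi ex]]; exists x^-1; split => //; last by rewrite (valV nx ex).
  by apply/eqP; rewrite invr_eq0; apply/eqP.
by rewrite invrK.
Qed.
Lemma HD g h : H g -> H h -> H (g + h).
Proof.
move=> [x [Ax nx Axi ex]] [y [Ay ny Ayi ey]]; exists (x * y); split.
- exact: AM.
- by apply/eqP; rewrite mulf_neq0 //; apply/eqP.
- by rewrite invfM; apply: AM.
- by rewrite valM ex ey.
Qed.
Lemma Hconv h k : H h -> le 0 k -> le k h -> H k.
Proof.
move=> [x [Ax nx Axi ex]] h0 hk; have [y ey] := valsurj k.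
have ny : y <> 0 by move=> y0; move: ey; rewrite y0 (proj2 (val0x 0) erefl).
exists y; split => //.
- by apply: AB; rewrite /valB ey.
- have -> : y^-1 = x^-1 * (x * y^-1).
    by rewrite mulrA mulVf ?mul1r //; apply/eqP.
  apply: AM => //; apply: AB; rewrite /valB valM ex (valV ny ey) /=.
  exact: lesub.
Qed.
Lemma Hhalf k : H (k + k) -> H k.
Proof.
move=> hk; case: (letot 0 k) => h.
  apply: (Hconv hk) => //; by have := leaddl k h; rewrite addr0.
rewrite -(opprK k); apply: HN; have h' : le 0 (- k) by have := leopp h; rewrite oppr0.
apply: (Hconv (HN hk)) => //; rewrite opprD; by have := leaddl (- k) h'; rewrite addr0.
Qed.
Lemma Hbelow h k : H h -> ~ H k -> le 0 k -> glt le h k.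
Proof. move=> hh nk k0; apply: glt_not_le => kh; apply: nk; exact: Hconv hh k0 kh. Qed.

Lemma E1 (ga gx g k : G) : gx - g = k + k -> ga + ga + gx - g = (ga + k) + (ga + k).
Proof. by move=> e; rewrite -addrA e addrACA. Qed.

Lemma idx_scale ga gx g : (H ga \/ le 0 ga) -> eq_modG2 gx g ->
  (eq_modH2 H gx g \/ glt le g gx) ->
  eq_modH2 H (ga + ga + gx) g \/ glt le g (ga + ga + gx).
Proof.
move=> iga [k ek] hx.
have eX : ga + ga + gx - g = (ga + ga) + (gx - g) by rewrite -addrA.
case: (Classical_Prop.classic (H ga)) => hga.
  case: hx => [[m [hm em]] | [lgx ngx]].
    by left; exists (ga + m); split; [exact: HD | exact: E1].
  case: (Classical_Prop.classic (H (gx - g))) => hd.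
    left; exists (ga + k); split; last exact: E1.
    by apply: HD => //; apply: Hhalf; rewrite -ek.
  right; apply: glt_not_le => lX; apply: hd.
  apply: (Hconv (HN (HD hga hga))); first exact: lesub.
  apply: le_shift; rewrite -eX; by have := leaddr (- g) lX; rewrite subrr.
have ga0 : le 0 ga by case: iga.
have s0 : le 0 (ga + ga) by have := leD ga0 ga0; rewrite addr0.
right; case: hx => [[m [hm em]] | [lgx ngx]].
  have [l1 n1] := Hbelow (HN hm) hga ga0.
  have p0 : le 0 (ga + m) by have := lesub l1; rewrite opprK.
  apply: glt_not_le => lX; apply: n1; apply/eqP; rewrite eq_sym -addr_eq0; apply/eqP.
  apply: double0 => //; rewrite -(E1 ga em); by have := leaddr (- g) lX; rewrite subrr.
apply: glt_not_le => lX; apply: ngx; apply: leanti => //; apply: letr lX.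
by have := leaddr gx s0; rewrite add0r.
Qed.

Lemma idx_sum gy h gz : (eq_modH2 H gy h \/ glt le h gy) -> le gy gz ->
  eq_modH H h gz \/ le h gz.
Proof.
move=> [[k [hk ek]] | [l _]] lyz; last by right; exact: letr lyz.
case: (letot h gz) => l; [by right | left].
rewrite /eq_modH; apply: (Hconv (HN (HD hk hk))); first exact: lesub.
rewrite -ek opprB; apply: leaddl; exact: leopp.
Qed.

Lemma modG2_comb (gx g h : G) : eq_modG2 gx g -> eq_modG2 gx h -> eq_modG2 g h.
Proof.
move=> [a ea] [b eb]; exists (b - a).
have -> : g - h = (gx - h) - (gx - g) by rewrite opprB [RHS]addrC addrA subrK.
by rewrite ea eb opprD addrACA.
Qed.

End S.

Lemma M_full (F : fieldType) (M : F -> Prop) (c : F) :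
  qq_module (fun _ => True) M -> (2%:R : F) <> 0 -> c <> 0 -> M c -> M (- c) ->
  forall t, M t.
Proof.
move=> [_ hD hS] h2 hc mc mnc t.
have -> : t = ((t / c + 1) / 2%:R) * ((t / c + 1) / 2%:R) * c
   + ((t / c - 1) / 2%:R) * ((t / c - 1) / 2%:R) * (- c).
  have h2' : (2%:R : F) != 0 by apply/eqP.
  have hc' : c != 0 by apply/eqP.
  field; by rewrite h2' hc'.
by apply: hD; apply: hS.
Qed.

Section Main.
Variables (G : zmodType) (le : G -> G -> Prop)
    (K F : fieldType) (val : K -> option G) (pi : K -> F) (pan : K -> F)
    (A : K -> Prop) (M : G -> F -> Prop).
Hypothesis T : is_toag le.
Hypothesis V : is_valuation le val.
Hypothesis two : (2%:R : F) <> 0.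
Hypothesis P : is_pan le val pi pan.
Hypothesis SA : is_subring_overB le val A.
Notation H := (Hgrp val A).
Hypothesis Mqq : forall g, H g \/ le 0 g -> qq_module (fun _ => True) (M g).
Hypothesis Mmono : forall g h, H g \/ le 0 g -> H h \/ le 0 h ->
     ((le g h /\ eq_modG2 g h) \/
      ((forall c, M g c) /\ (eq_modH H g h \/ le g h))) ->
     forall c, M g c -> M h c.

Definition Sset x := exists g, (H g \/ le 0 g) /\ PhiA le val pan A (M g) g x.

Lemma pan_nz x : x <> 0 -> pan x <> 0. Proof. by case: P => h _; apply: h. Qed.
Lemma pan4 x1 x2 : x1 <> 0 -> x2 <> 0 -> x1 + x2 <> 0 ->
         (olt le (val x1) (val x2) -> pan (x1 + x2) = pan x1) /\
         (val x1 = val x2 -> pan x1 + pan x2 <> 0 ->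
            val (x1 + x2) = val x1 /\ pan (x1 + x2) = pan x1 + pan x2).
Proof. by case: P => _ [_ [_ [_ [h _]]]]; apply: h. Qed.
Lemma pan6 a u : a <> 0 -> u <> 0 ->
         exists k, k <> 0 /\ pan (a * (u * u)) = pan a * (k * k).
Proof. by case: P => _ [_ [_ [_ [_ [_ h]]]]]; apply: h. Qed.

Lemma S0 : Sset 0.
Proof. exists 0; split; [right; exact: (lerefl T) | by left]. Qed.

Lemma Sscale a x : A a -> Sset x -> Sset (a * a * x).
Proof.
move=> Aa [g [ig [->|[Ax [nx [gx [ex e2 eh mp]]]]]]].
  by rewrite mulr0; exact: S0.
case: (Classical_Prop.classic (a = 0)) => [->|na].
  by rewrite !mul0r; exact: S0.
exists g; split => //; right; split; first by apply: (AM SA) => //; apply: (AM SA).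
split; first by apply/eqP; rewrite !mulf_neq0 //; apply/eqP.
have [ga ega] := valS V na.
have iga := A_idx T V SA Aa na ega.
exists (ga + ga + gx); split.
- by rewrite !(valM V) ega ex.
- by case: e2 => k ek; exists (ga + k); exact: E1.
- exact: (idx_scale T V SA).
- rewrite [a * a * x]mulrC; have [k [_ ->]] := pan6 nx na.
  by rewrite mulrC; case: (Mqq ig) => _ _; apply.
Qed.

Lemma add_lt x y g gx gy : A x -> A y -> x <> 0 -> y <> 0 -> x + y <> 0 ->
  val x = Some gx -> val y = Some gy -> glt le gx gy ->
  eq_modG2 gx g -> (eq_modH2 H gx g \/ glt le g gx) -> M g (pan x) ->
  PhiA le val pan A (M g) g (x + y).
Proof.
move=> Ax Ay nx ny nxy ex ey [lxy nexy] e2 eh mp; right.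
split; first exact: (AD SA).
split => //; exists gx; split => //.
- have [gz ez] := valS V nxy.
  rewrite ez; congr Some; apply: (leanti T).
  + have := valult V (x + y) (- y); rewrite addrK ez ex (valN T V) ey /=.
    case=> // l; case: nexy; exact: (leanti T).
  + have := valult V x y; rewrite ez ex ey /=.
    case=> // l; exact: (letr T lxy).
- rewrite (proj1 (pan4 nx ny nxy)) //; split; first by rewrite ex ey.
  by rewrite ex ey => -[].
Qed.

Lemma add_eq x y g h gx : A x -> A y -> x <> 0 -> y <> 0 -> x + y <> 0 ->
  val x = Some gx -> val y = Some gx -> H g \/ le 0 g -> H h \/ le 0 h -> le g h ->
  eq_modG2 gx g -> eq_modG2 gx h -> (eq_modH2 H gx h \/ glt le h gx) ->
  M g (pan x) -> M h (pan y) -> Sset (x + y).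
Proof.
move=> Ax Ay nx ny nxy ex ey ig ih lgh e2g e2h ehh mx my.
have mx' : M h (pan x).
  apply: (Mmono ig ih) => //; left; split => //; exact: modG2_comb e2g e2h.
case: (Classical_Prop.classic (pan x + pan y = 0)) => hs.
  have epy : pan y = - pan x by apply/eqP; rewrite -addr_eq0 addrC; apply/eqP.
  have full : forall c, M h c.
    apply: (M_full (Mqq ih) two (pan_nz nx)) => //; by rewrite -epy.
  have [gz ez] := valS V nxy.
  have Axy : A (x + y) by exact: (AD SA).
  have igz := A_idx T V SA Axy nxy ez.
  have lz : le gx gz.
    have := valult V x y; rewrite ez ex ey /=; by case.
  have fz : forall c, M gz c.
    move=> c; apply: (Mmono ih igz) => //; right; split => //.
    exact: (idx_sum T V SA ehh lz).
  exists gz; split => //; right; split => //; split => //; exists gz; split => //.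
  - by exists 0; rewrite subrr addr0.
  - by left; exists 0; split; [exact: (H0 V SA) | rewrite subrr addr0].
have [ev ep] := pan4 nx ny nxy.
have [ev' ep'] := ep (etrans ex (esym ey)) hs.
exists h; split => //; right; split; first exact: (AD SA).
split => //; exists gx; split => //; first by rewrite ev' ex.
rewrite ep'; case: (Mqq ih) => _ hD _; exact: hD.
Qed.

Lemma Sadd x y : Sset x -> Sset y -> Sset (x + y).
Proof.
move=> [g [ig [->|[Ax [nx [gx [ex e2x ehx mx]]]]]]]; first by rewrite add0r.
move=> [h [ih [->|[Ay [ny [gy [ey e2y ehy my]]]]]]]; first by rewrite addr0; exists g; split => //; right; split => //; split => //; exists gx.
case: (Classical_Prop.classic (x + y = 0)) => [->|nxy]; first exact: S0.
case: (Classical_Prop.classic (gx = gy)) => [egxy|negxy].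
  subst gy; case: (letot T g h) => l.
    exact: (add_eq Ax Ay nx ny nxy ex ey ig ih l).
  rewrite addrC; apply: (add_eq Ay Ax ny nx _ ey ex ih ig l) => //.
  by rewrite addrC.
case: (letot T gx gy) => l.
  exists g; split => //; exact: (add_lt Ax Ay nx ny nxy ex ey).
exists h; split => //; rewrite addrC.
apply: (add_lt Ay Ax ny nx _ ey ex) => //; first by rewrite addrC.
by split => // e; apply: negxy.
Qed.

End Main.

Theorem mainTheorem8 (G : zmodType) (le : G -> G -> Prop)
    (K F : fieldType) (val : K -> option G) (pi : K -> F) (pan : K -> F)
    (A : K -> Prop) (M : G -> F -> Prop) :
  is_toag le ->
  is_valuation le val ->
  is_residue_map le val pi ->
  two_henselian val pi ->
  (2%:R : F) <> 0 ->
  is_pan le val pi pan ->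
  is_subring_overB le val A ->
  (forall g, Hgrp val A g \/ le 0 g -> qq_module (fun _ => True) (M g)) ->
  (forall g h, Hgrp val A g \/ le 0 g -> Hgrp val A h \/ le 0 h ->
     ((le g h /\ eq_modG2 g h) \/
      ((forall c, M g c) /\ (eq_modH (Hgrp val A) g h \/ le g h))) ->
     forall c, M g c -> M h c) ->
  qq_module A (fun x => exists g, (Hgrp val A g \/ le 0 g) /\
                                  PhiA le val pan A (M g) g x).
Proof.
move=> T V _ _ two P SA Mqq Mmono; split.
- move=> x [g [_ [->|[Ax _]]]] //; exact: (A0 SA).
- move=> x y; exact: (Sadd T V two P SA Mqq Mmono).
- move=> a x; exact: (Sscale T V P SA Mqq).
Qed.
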